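(* Let $G$ be a $k$-uniform tight cycle (an $s$-cycle with $s=k-1$), with $m=n$ edges and vertices. Then $G$ is regular. Assume further that $k$ is even and write $k=2^{t_0}(2l_0+1)$ with nonnegative integers $t_0,l_0$. Then $G$ is odd-bipartite if and only if $m=n$ is a multiple of $2^{t_0}$.
   Context: A $k$-uniform $s$-cycle with $m$ edges has vertex set $\mathbb{Z}_n$, $n=m(k-s)$ (vertex $n+i$ identified with $i$), and edges $e_j=\{j(k-s)+1,\ldots,j(k-s)+k\}$, $j=0,\ldots,m-1$; it is assumed that $n\ge 2k-s$ (for $s=k-1$: $n=m\ge k+1$). A hypergraph is regular if all vertex degrees are equal. A $k$-uniform hypergraph with $k$ even and vertex set $V$ is odd-bipartite if either it has no edges or there is a partition $V=V_1\cup V_2$ with $V_1,V_2\ne\emptyset$ such that every edge intersects $V_1$ in an odd number of vertices. *)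

(* Defs.v *)
From mathcomp Require Import all_boot.
Set Implicit Arguments. Unset Strict Implicit. Unset Printing Implicit Defensive.

Definition hdeg (n m : nat) (E : 'I_m -> {set 'I_n}) (v : 'I_n) : nat :=
  #|[set j : 'I_m | v \in E j]|.

Definition hregular (n m : nat) (E : 'I_m -> {set 'I_n}) : Prop :=
  forall u v : 'I_n, hdeg E u = hdeg E v.

Definition odd_bipartite (n m : nat) (E : 'I_m -> {set 'I_n}) : Prop :=
  m = 0 \/
  exists V1 : {set 'I_n}, V1 != set0 /\ ~: V1 != set0 /\
    forall j : 'I_m, odd #|E j :&: V1|.

(* k-uniform s-cycle with m edges: vertex set Z_n, n = m(k-s), represented
   by 'I_n (vertex n+i identified with i, i.e. vertices taken mod n);
   edge e_j = {j(k-s)+1, ..., j(k-s)+k} (mod n). *)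
Definition scycle (k s m : nat) (j : 'I_m) : {set 'I_(m * (k - s))} :=
  [set v : 'I_(m * (k - s)) |
     [exists i : 'I_k, (j * (k - s) + i.+1) %% (m * (k - s)) == val v]].
Arguments scycle k s m j : clear implicits.

(* Main.v *)
Require Import Defs.
From mathcomp Require Import all_boot.

Definition periodic (F : nat -> nat) p := forall y, F (y + p) = F y.

Lemma per_mul F p c : periodic F p -> periodic F (c * p).
Proof.
move=> hp; elim: c => [|c IH] y; first by rewrite mul0n addn0.
by rewrite mulSn addnA IH hp.
Qed.

Lemma per_shift F g a : 0 < g -> periodic F g ->
  \sum_(r < g) F (a + r) = \sum_(r < g) F r.
Proof.
case: g => // g _ hp; elim: a => [|a IH]; first by apply: eq_bigr => r _; rewrite add0n.
rewrite -IH big_ord_recr big_ord_recl /= addn0 addnC addSnnS hp.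
congr (_ + _); apply: eq_bigr => r _ /=; by rewrite addSnnS.
Qed.

Lemma per_block F g q a N : periodic F g -> N = q * g ->
  \sum_(i < N) F (a + i) = q * \sum_(r < g) F (a + r).
Proof.
move=> hp ->; elim: q => [|q IH]; first by rewrite mul0n big_ord0.
rewrite mulSn big_split_ord /= [q.+1 * _]mulSn -IH; apply: f_equal2 => //.
apply: eq_bigr => i _ /=.
by rewrite addnA [a + g]addnC -addnA addnC hp addnC.
Qed.

Lemma ordS_const n (f : 'I_n -> nat) : (forall x, f (ordS x) = f x) ->
  forall u v, f u = f v.
Proof.
move=> hf.
have it : forall r x, f (iter r (@ordS n) x) = f x.
  by elim=> [|r IH] x //=; rewrite hf IH.
have itv : forall r (x : 'I_n), val (iter r (@ordS n) x) = (x + r) %% n.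
  elim=> [|r IH] x /=; first by rewrite addn0 modn_small.
  by rewrite IH addnS -[(_ %% n).+1]addn1 modnDml addn1.
move=> u v; rewrite -(it (v + n - u) u).
congr f; apply: val_inj; rewrite itv.
have hu := ltn_ord u.
rewrite addnC subnK; last by rewrite ltnW // ltn_addl.
by rewrite modnDr modn_small.
Qed.

Lemma sum_dvd g : 0 < g -> \sum_(r < g) (g %| r : nat) = 1.
Proof.
case: g => // g _; rewrite big_ord_recl dvdn0 big1 // => i _.
have hi := ltn_ord i; rewrite lift0.
case: (boolP (g.+1 %| i.+1)) => // /(dvdn_leq (ltn0Sn _)).
by rewrite ltnS leqNgt hi.
Qed.

Section TC.
Variables (k s m : nat).
Hypothesis hks : k - s = 1.
Hypothesis hkm : k < m.

Lemma hn : m * (k - s) = m.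
Proof. by rewrite hks muln1. Qed.

Lemma mpos : 0 < m.
Proof. exact: leq_ltn_trans (leq0n k) hkm. Qed.

Lemma npos : 0 < m * (k - s).
Proof. by rewrite hn mpos. Qed.

Lemma memE (v : 'I_(m * (k - s))) (j : 'I_m) :
  (v \in scycle k s m j) = [exists i : 'I_k, (j + i.+1) %% m == v].
Proof. rewrite inE; change (val v) with (nat_of_ord v); move: (nat_of_ord v) => y; by rewrite hks !muln1. Qed.

Lemma ltn_vm (v : 'I_(m * (k - s))) : v < m.
Proof. move: (ltn_ord v); move: (nat_of_ord v) => y; by rewrite hn. Qed.

Lemma valS (v : 'I_(m * (k - s))) : val (ordS v) = v.+1 %% m.
Proof. rewrite /=; move: (nat_of_ord v) => y; by rewrite hn. Qed.

Lemma memS v j : (ordS v \in scycle k s m (ordS j)) = (v \in scycle k s m j).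
Proof.
rewrite !memE valS /=; apply: eq_existsb => i.
rewrite modnDml addSn -add1n -[v.+1]add1n eqn_modDl.
by rewrite (modn_small (ltn_vm v)).
Qed.

Lemma reg : hregular (scycle k s m).
Proof.
move=> u v; apply: ordS_const => x; rewrite /hdeg.
rewrite -(card_preimset _ (@ordS_inj m)).
by apply: eq_card => j; have := memS x j; rewrite !inE.
Qed.

Definition xb (V1 : {set 'I_(m * (k - s))}) (y : nat) : bool :=
  [exists v : 'I_(m * (k - s)), (v \in V1) && (val v == y %% m)].

Definition mk (y : nat) : 'I_(m * (k - s)) := Ordinal (ltn_pmod y npos).

Lemma valmk y : val (mk y) = y %% m.
Proof. by rewrite /= hn. Qed.

Lemma cardE V1 (j : 'I_m) :
  #|scycle k s m j :&: V1| = \sum_(i < k) xb V1 (j + i.+1).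
Proof.
have inj : injective (fun i : 'I_k => mk (j + i.+1)).
  move=> i1 i2 /(congr1 val); rewrite !valmk => /eqP; rewrite eqn_modDl.
  rewrite !modn_small ?(leq_ltn_trans (ltn_ord _) hkm) // => /eqP [] e.
  exact: val_inj.
have -> : scycle k s m j :&: V1 =
    (fun i : 'I_k => mk (j + i.+1)) @: [set i : 'I_k | xb V1 (j + i.+1)].
  apply/setP => v; rewrite inE memE; apply/andP/imsetP.
  - case=> /existsP [i /eqP hi] hv; exists i.
      by rewrite inE; apply/existsP; exists v; rewrite hv hi eqxx.
    by apply: val_inj; rewrite valmk.
  - case=> i; rewrite inE => /existsP [w /andP [hw /eqP hwv]] ->; split.
      by apply/existsP; exists i; rewrite valmk.
    have -> : mk (j + i.+1) = w by apply: val_inj; rewrite valmk hwv.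
    done.
rewrite card_imset // -sum1_card big_mkcond /=.
by apply: eq_bigr => i _; rewrite inE; case: (xb _ _).
Qed.


Lemma xbmod V1 y : xb V1 (y %% m) = xb V1 y.
Proof. by rewrite /xb modn_mod. Qed.

Lemma oddS V1 (h : forall j : 'I_m, odd #|scycle k s m j :&: V1|) (j : nat) :
  odd (\sum_(i < k) xb V1 (j + i.+1)).
Proof.
have := h (Ordinal (ltn_pmod j mpos)); rewrite cardE /=.
have -> // : \sum_(i < k) xb V1 (j %% m + i.+1) = \sum_(i < k) xb V1 (j + i.+1).
by apply: eq_bigr => i _; rewrite -xbmod modnDml xbmod.
Qed.

Lemma perk V1 (h : forall j : 'I_m, odd #|scycle k s m j :&: V1|) :
  periodic (fun y => nat_of_bool (xb V1 y)) k.
Proof.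
have kpos : 0 < k by case: k hks.
have step : forall j, xb V1 (j.+1 + k) = xb V1 j.+1.
  move=> j; have h1 := oddS _ h j; have h2 := oddS _ h j.+1.
  move: h1 h2; case: k kpos => // k' _.
  rewrite big_ord_recl big_ord_recr /= addn1.
  have -> : \sum_(i < k') xb V1 (j + (bump 0 i).+1) = \sum_(i < k') xb V1 (j.+1 + i.+1).
    by apply: eq_bigr => i _; rewrite /bump /= add1n addSnnS.
  rewrite !oddD addSnnS.
  by case: (xb V1 j.+1); case: (xb V1 (j + k'.+2)); case: (odd (\sum_(i < k') _)).
move=> y /=; case: y => [|y]; last by rewrite step.
have mp := mpos; have := step m.-1; rewrite prednK //.
rewrite -(xbmod V1 (m + k)) -(xbmod V1 m) modnDl modnn => e.
by rewrite add0n -(xbmod V1 k) e.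
Qed.


Lemma fwd V1 t0 (h : forall j : 'I_m, odd #|scycle k s m j :&: V1|) :
  2 ^ t0 %| k -> 2 ^ t0 %| m.
Proof.
move=> hk.
set F := fun y => nat_of_bool (xb V1 y).
have pk : periodic F k := perk _ h.
have pm : periodic F m by move=> y; rewrite /F -xbmod modnDr xbmod.
set g := gcdn k m.
have pg : periodic F g.
  move=> y; case: (Bezoutl k mpos) => a _ hd; rewrite gcdnC -/g in hd.
  rewrite -(per_mul _ _ a pk (y + g)) -addnA -(divnK hd).
  exact: (per_mul _ _ _ pm).
have gk : g %| k := dvdn_gcdl k m.
have hq : odd (k %/ g).
  have := oddS _ h 0.
  rewrite (_ : \sum_(i < k) xb V1 (0 + i.+1) = \sum_(i < k) F (1 + i)); last first.
    by apply: eq_bigr => i _; rewrite add0n add1n.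
  by rewrite (per_block _ _ _ 1 _ pg (esym (divnK gk))) oddM => /andP [].
have cop : coprime (2 ^ t0) (k %/ g).
  case: t0 hk => [|t] _; first by rewrite expn0 coprime1n.
  by rewrite coprime_pexpl // coprime2n.
apply: dvdn_trans (dvdn_gcdr k m).
by rewrite -(Gauss_dvdl g cop) mulnC divnK.
Qed.


Lemma bwd t0 l0 : 0 < t0 -> k = 2 ^ t0 * (2 * l0 + 1) -> 2 ^ t0 %| m ->
  exists V1 : {set 'I_(m * (k - s))}, V1 != set0 /\ ~: V1 != set0 /\
    forall j : 'I_m, odd #|scycle k s m j :&: V1|.
Proof.
move=> t0p hk hm2.
have kpos : 0 < k by case: k hks.
set g := gcdn k m.
have gpos : 0 < g by rewrite gcdn_gt0 kpos.
have tg : 2 ^ t0 %| g by rewrite dvdn_gcd hm2 andbT hk dvdn_mulr.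
have g2 : 1 < g.
  apply: dvdn_leq => //; apply: dvdn_trans tg.
  by rewrite -{1}(expn1 2) dvdn_exp2l.
have hq : odd (k %/ g).
  have e : k %/ g * (g %/ 2 ^ t0) * 2 ^ t0 = 2 ^ t0 * (2 * l0 + 1).
    by rewrite -mulnA (divnK tg) (divnK (dvdn_gcdl k m)).
  move: e; rewrite mulnC => /eqP; rewrite eqn_pmul2l ?expn_gt0 // => /eqP e.
  have : odd (k %/ g * (g %/ 2 ^ t0)) by rewrite e addn1 /= oddM.
  by rewrite oddM => /andP [].
exists [set v : 'I_(m * (k - s)) | g %| v].
have xbE : forall y, xb [set v : 'I_(m * (k - s)) | g %| v] y = (g %| y).
  move=> y; rewrite /xb; apply/existsP/idP.
    case=> v /andP [hv /eqP e]; move: hv; rewrite inE.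
    change (nat_of_ord v) with (val v); rewrite e.
    by rewrite /dvdn modn_dvdm // dvdn_gcdr.
  move=> hy; exists (mk y); rewrite inE /= hn eqxx andbT.
  by move: hy; rewrite /dvdn modn_dvdm // dvdn_gcdr.
split.
  by apply/set0Pn; exists (mk 0); rewrite inE /= mod0n dvdn0.
split.
  apply/set0Pn; exists (mk 1); rewrite !inE /= hn modn_small ?dvdn1 ?gtn_eqF //.
  exact: leq_ltn_trans kpos hkm.
move=> j; rewrite cardE.
set F := fun y => nat_of_bool (g %| y).
have pg : periodic F g by move=> y; rewrite /F dvdn_addl.
rewrite (_ : \sum_(i < k) _ = \sum_(i < k) F (j.+1 + i)); last first.
  by apply: eq_bigr => i _; rewrite xbE /F addSnnS.
rewrite (per_block _ _ _ _ _ pg (esym (divnK (dvdn_gcdl k m)))).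
by rewrite (per_shift _ _ _ gpos pg) sum_dvd // muln1.
Qed.

End TC.

Theorem corollary4p2 (k m : nat) (hm : k.+1 <= m) :
  hregular (scycle k k.-1 m) /\
  (~~ odd k -> forall t0 l0 : nat, k = 2 ^ t0 * (2 * l0 + 1) ->
     (odd_bipartite (scycle k k.-1 m) <-> 2 ^ t0 %| m)).
Proof.
case: k hm => [|k] hm.
  split.
    by move=> [u hu] v; exfalso; move: hu; rewrite /= sub0n muln0.
  move=> _ t0 l0 /eqP; rewrite eq_sym muln_eq0 expn_eq0 addn1 //.
have hks : k.+1 - k.+1.-1 = 1 by rewrite /= subSnn.
split; first exact: (reg _ _ _ hks).
move=> hodd t0 l0 hk; split.
  case=> [m0|[V1 [_ [_ h]]]]; first by rewrite m0 in hm.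
  by apply: (fwd _ _ _ hks hm V1 t0 h); rewrite hk dvdn_mulr.
move=> hm2; right.
case: t0 hk hm2 => [|t] hk hm2.
  by move: hodd; rewrite hk expn0 mul1n addn1 /= oddM.
by apply: (bwd _ _ _ hks hm t.+1 l0 _ hk hm2).
Qed.
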